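(* If $\mathfrak{q}$ is a $\mathrm{Lie}$-nilpotent Leibniz algebra, then $\mathfrak{q}$ satisfies the $\mathrm{Lie}$-normalizer condition, i.e. every proper subalgebra $\mathfrak{s}$ of $\mathfrak{q}$ is properly contained in its $\mathrm{Lie}$-normalizer $N^{\mathrm{Lie}}_{\mathfrak{q}}(\mathfrak{s})$.
   Context: Fix a field $\mathbb{K}$ with $\frac12\in\mathbb{K}$. A Leibniz algebra is a $\mathbb{K}$-vector space with a bilinear bracket satisfying $[x,[y,z]]=[[x,y],z]-[[x,z],y]$. For two-sided ideals $\mathfrak{m},\mathfrak{n}$ of $\mathfrak{q}$, $[\mathfrak{m},\mathfrak{n}]_{\mathrm{Lie}}$ is the subspace spanned by all $[m,n]+[n,m]$, $m\in\mathfrak{m}$, $n\in\mathfrak{n}$. The lower $\mathrm{Lie}$-central series is $\mathfrak{q}^{[1]}=\mathfrak{q}$, $\mathfrak{q}^{[i]}=[\mathfrak{q}^{[i-1]},\mathfrak{q}]_{\mathrm{Lie}}$; $\mathfrak{q}$ is $\mathrm{Lie}$-nilpotent if $\mathfrak{q}^{[k]}=0$ for some $k$. For a subset $\mathfrak{m}\subseteq\mathfrak{q}$, the $\mathrm{Lie}$-normalizer is $N^{\mathrm{Lie}}_{\mathfrak{q}}(\mathfrak{m})=\{q\in\mathfrak{q}: [q,m]+[m,q]\in\mathfrak{m}\text{ for all } m\in\mathfrak{m}\}$. *)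

(* Defs.v *)
From HB Require Import structures.
From mathcomp Require Import all_boot all_order all_algebra.
Set Implicit Arguments. Unset Strict Implicit. Unset Printing Implicit Defensive.
Import GRing.Theory.
Local Open Scope ring_scope.

Definition bilinear_bracket (K : fieldType) (V : lmodType K) (br : V -> V -> V) : Prop :=
  (forall (a : K) (x y z : V), br (a *: x + y) z = a *: br x z + br y z) /\
  (forall (a : K) (x y z : V), br z (a *: x + y) = a *: br z x + br z y).

Definition leibniz_identity (K : fieldType) (V : lmodType K) (br : V -> V -> V) : Prop :=
  forall x y z : V, br x (br y z) = br (br x y) z - br (br x z) y.

Definition is_leibniz_algebra (K : fieldType) (V : lmodType K) (br : V -> V -> V) : Prop :=
  bilinear_bracket br /\ leibniz_identity br.

Definition is_subspace (K : fieldType) (V : lmodType K) (S : V -> Prop) : Prop :=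
  S 0 /\ (forall (a : K) (x y : V), S x -> S y -> S (a *: x + y)).

Definition is_subalgebra (K : fieldType) (V : lmodType K) (br : V -> V -> V)
  (S : V -> Prop) : Prop :=
  is_subspace S /\ (forall x y, S x -> S y -> S (br x y)).

Definition span (K : fieldType) (V : lmodType K) (A : V -> Prop) : V -> Prop :=
  fun v => forall P : V -> Prop, is_subspace P -> (forall a, A a -> P a) -> P v.

Definition lie_bracket_sets (K : fieldType) (V : lmodType K) (br : V -> V -> V)
  (M N : V -> Prop) : V -> Prop :=
  span (fun v => exists m n, M m /\ N n /\ v = br m n + br n m).

(* Lower Lie-central series: lie_lcs br 0 = q^[1] = q,
   lie_lcs br i.+1 = [lie_lcs br i, q]_Lie, i.e. lie_lcs br (i-1) = q^[i]. *)
Fixpoint lie_lcs (K : fieldType) (V : lmodType K) (br : V -> V -> V) (i : nat)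
  : V -> Prop :=
  match i with
  | 0 => fun _ => True
  | i'.+1 => lie_bracket_sets br (lie_lcs br i') (fun _ => True)
  end.

Definition lie_nilpotent (K : fieldType) (V : lmodType K) (br : V -> V -> V) : Prop :=
  exists k : nat, forall v : V, lie_lcs br k v -> v = 0.

Definition lie_normalizer (K : fieldType) (V : lmodType K) (br : V -> V -> V)
  (M : V -> Prop) : V -> Prop :=
  fun q => forall m, M m -> M (br q m + br m q).

(* Main.v *)
Require Import Defs.
From mathcomp Require Import all_boot all_order all_algebra.
From Stdlib Require Import Classical.
Local Open Scope ring_scope.

Lemma find_step (P : nat -> Prop) : forall n, P 0%N -> ~ P n -> exists i, P i /\ ~ P i.+1.
Proof.
elim=> [|n IH] H0 Hn; first by [].
case: (classic (P n)) => Hp; first by exists n.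
exact: IH.
Qed.

Theorem mainTheorem2 (K : fieldType) (V : lmodType K) (br : V -> V -> V) :
  (2%:R : K) != 0 ->
  is_leibniz_algebra br ->
  lie_nilpotent br ->
  forall s : V -> Prop,
    is_subalgebra br s ->
    (exists x : V, ~ s x) ->
    (forall x, s x -> lie_normalizer br s x) /\
    (exists x : V, lie_normalizer br s x /\ ~ s x).
Proof.
move=> _ _ [k Hk] s [[s0 sl] sbr] [x0 Hx0].
have sadd : forall x y, s x -> s y -> s (x + y).
  by move=> x y hx hy; have := sl 1 x y hx hy; rewrite GRing.scale1r.
split.
  by move=> x hx m hm; apply: sadd; apply: sbr.
pose P i := exists x, lie_lcs br i x /\ ~ s x.
have P0 : P 0%N by exists x0.
have Pk : ~ P k by move=> [x [hx nx]]; apply: nx; rewrite (Hk x hx).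
have [i [[x [hx nx]] nPi]] := @find_step P k P0 Pk.
exists x; split=> // m hm.
apply: NNPP => hn; apply: nPi.
exists (br x m + br m x); split=> //.
move=> Q _ HQ; apply: HQ; exists x, m; split=> //.
Qed.
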